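(* Let $P$ be the uniform distribution on $[0,1]$ and $\beta=\{\frac14,\frac12\}$. The conditional optimal set of four-points for $P$ with respect to $\beta$ is $\alpha_4=\{\frac1{12},\frac14,\frac12,\frac56\}$, with $V_4=\frac{5}{768}$ ($\approx0.00651042$).
   Context: For a Borel probability measure $P$ on $\mathbb{R}$ and finite $\beta$ with $\mathrm{card}(\beta)=r$, for $n\ge r$, $V_n=\inf\{\int\min_{a\in\alpha\cup\beta}(x-a)^2dP(x):\mathrm{card}(\alpha)\le n-r\}$; a set $\alpha\cup\beta$ attaining the infimum, with each point of $\beta$ having a Voronoi region of positive $P$-measure, is a conditional optimal set of $n$-points with respect to $\beta$. *)

(* Defs.v *)
From HB Require Import structures.
From mathcomp Require Import all_boot all_order all_algebra finmap.
From mathcomp Require Import all_classical all_reals all_analysis.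
Set Implicit Arguments. Unset Strict Implicit. Unset Printing Implicit Defensive.
Import Order.TTheory GRing.Theory Num.Theory.
Local Open Scope classical_set_scope.
Local Open Scope ring_scope.
Local Open Scope ereal_scope.

Section CondQuant.
Context (R : realType).

Definition mindist (S : {fset R}) (x : R) : \bar R :=
  \big[Order.min/+oo]_(a <- S) ((x - a) ^+ 2)%:E.

Definition distortion (P : probability (measurableTypeR R) R) (S : {fset R}) : \bar R :=
  \int[P]_x mindist S x.

Definition condV (P : probability (measurableTypeR R) R) (beta : {fset R}) (n : nat) : \bar R :=
  ereal_inf [set distortion P (alpha `|` beta)%fset |
             alpha in [set alpha : {fset R} | (#|` alpha| <= n - #|` beta|)%N]].

Definition voronoi (S : {fset R}) (a : R) : set R :=
  [set x : R | forall b, b \in S -> ((x - a) ^+ 2 <= (x - b) ^+ 2)%R].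

Definition cond_optimal (P : probability (measurableTypeR R) R) (beta : {fset R}) (n : nat)
    (S : {fset R}) : Prop :=
  (#|` beta| <= n)%N /\
  exists alpha : {fset R},
    [/\ (#|` alpha| <= n - #|` beta|)%N, S = (alpha `|` beta)%fset,
        distortion P S = condV P beta n &
        forall b, b \in beta -> 0 < P (voronoi S b)].

End CondQuant.

(* Main.v *)
Require Import Defs.
From HB Require Import structures.
From mathcomp Require Import all_boot all_order all_algebra finmap.
From mathcomp Require Import all_classical all_reals all_analysis.
From mathcomp Require Import measurable_realfun ring lra.
Import Order.TTheory GRing.Theory Num.Def Num.Theory.
Import numFieldTopology.Exports numFieldNormedType.Exports.
Set Implicit Arguments. Unset Strict Implicit.
Local Open Scope ring_scope.

Section S.
Context (R : realType).
Local Open Scope classical_set_scope.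
Local Notation mu := (@lebesgue_measure R).

Definition sqc (c x : R) : R := (x - c) ^+ 2.

Definition Fc (c : R) := ((fun y : R => y - c) ^+ 3 * cst (3^-1 : R))%R.

Lemma Fc_is_derive (c x : R) : is_derive x (1:R) (Fc c) ((x - c) ^+ 2).
Proof.
rewrite /Fc.
have h1 : is_derive x (1:R) (fun y : R => y - c) 1.
  have := @is_deriveB R R R id (cst c) x 1 1 0 (is_derive_id _ _) (is_derive_cst _ _ _).
  by rewrite subr0.
have h2 := is_deriveX 3 h1.
have h3 := is_deriveM h2 (is_derive_cst (3^-1 : R) x 1).
move: h3. rewrite !fctE => h3.
eapply is_derive_eq; first exact: h3.
rewrite scaler0 add0r /GRing.scale /= mulr1.
by rewrite mulrA mulVf ?mul1r // pnatr_eq0.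
Qed.

Lemma sq_cont (c : R) : continuous (fun x : R => (x - c) ^+ 2).
Proof.
move=> x.
have -> : (fun x : R => (x - c) ^+ 2) = (fun x => x - c) \* (fun x => x - c).
  by apply/funext => y; rewrite /= expr2.
have h : {for x, continuous ((id : R -> R) - cst c)}.
  by apply: continuousB; [exact: cvg_id|exact: cvg_cst].
exact: continuousM.
Qed.

Lemma sqc_cont c : continuous (sqc c).
Proof. exact: sq_cont. Qed.

Lemma Fc_val c x : Fc c x = (x - c) ^+ 3 / 3.
Proof. by rewrite /Fc !fctE. Qed.

Lemma int_sq (a b c : R) : a <= b ->
  (\int[mu]_(x in `[a, b]) (sqc c x)%:E = (((b - c) ^+ 3 - (a - c) ^+ 3) / 3)%:E)%E.
Proof.
rewrite le_eqVlt => /orP[/eqP ->|ab].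
  by rewrite set_itvE integral_set1 subrr mul0r.
rewrite (@continuous_FTC2 _ (sqc c) (Fc c))//.
- by rewrite !Fc_val -EFinB mulrBl.
- exact/continuous_subspaceT/sqc_cont.
- split.
  + move=> x _; exact: (@ex_derive _ _ _ _ _ _ _ (Fc_is_derive c x)).
  + apply: cvg_at_right_filter.
    have : continuous (Fc c).
      move=> x; apply/differentiable_continuous/derivable1_diffP.
      exact: (@ex_derive _ _ _ _ _ _ _ (Fc_is_derive c x)).
    by move=> /(_ a).
  + apply: cvg_at_left_filter.
    have : continuous (Fc c).
      move=> x; apply/differentiable_continuous/derivable1_diffP.
      exact: (@ex_derive _ _ _ _ _ _ _ (Fc_is_derive c x)).
    by move=> /(_ b).
- move=> x _; rewrite derive1E.
  exact: (@derive_val _ _ _ _ _ _ _ (Fc_is_derive c x)).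
Qed.

Lemma int_split (f : R -> R) (a m b : R) : a <= m -> m <= b ->
  measurable_fun setT f -> (forall x, 0 <= f x) ->
  (\int[mu]_(x in `[a, b]) (f x)%:E =
   \int[mu]_(x in `[a, m]) (f x)%:E + \int[mu]_(x in `[m, b]) (f x)%:E)%E.
Proof.
move=> am mb mf f0.
rewrite (@itv_bndbnd_setU _ _ (BLeft a) (BRight m) (BRight b)); last 2 first.
- by rewrite bnd_simp.
- by rewrite bnd_simp.
rewrite ge0_integral_setU //=.
- by rewrite integral_itv_obnd_cbnd //; exact/measurable_EFinP/measurable_funTS.
- exact/measurable_EFinP/measurable_funTS.
- by move=> x _; rewrite lee_fin.
- apply/disj_setPS => x [] /=; rewrite !in_itv /= => /andP[_ h1] /andP[h2 _].
  by move: (lt_le_trans h2 h1); rewrite ltxx.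
Qed.

Lemma lb1 (f : R -> R) (a b c : R) : a <= b -> measurable_fun setT f ->
  (forall x, a <= x <= b -> (x - c) ^+ 2 <= f x) ->
  ((((b - c) ^+ 3 - (a - c) ^+ 3) / 3)%:E <= \int[mu]_(x in `[a, b]) (f x)%:E)%E.
Proof.
move=> ab mf h; rewrite -int_sq //; apply: ge0_le_integral => //=.
- by move=> x _; rewrite lee_fin /sqc sqr_ge0.
- have mc := continuous_measurable_fun (@sqc_cont c). exact/measurable_EFinP/measurable_funTS.
- exact/measurable_EFinP/measurable_funTS.
Qed.

Lemma ub1 (f : R -> R) (a b c : R) : a <= b -> measurable_fun setT f ->
  (forall x, 0 <= f x) ->
  (forall x, a <= x <= b -> f x <= (x - c) ^+ 2) ->
  (\int[mu]_(x in `[a, b]) (f x)%:E <= (((b - c) ^+ 3 - (a - c) ^+ 3) / 3)%:E)%E.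
Proof.
move=> ab mf f0 h; rewrite -int_sq //; apply: ge0_le_integral => //=.
- by move=> x _; rewrite lee_fin.
- exact/measurable_EFinP/measurable_funTS.
- have mc := continuous_measurable_fun (@sqc_cont c). exact/measurable_EFinP/measurable_funTS.
Qed.

Lemma lb2 (f : R -> R) (a m b c1 c2 : R) : a <= m -> m <= b ->
  measurable_fun setT f -> (forall x, 0 <= f x) ->
  (forall x, a <= x <= m -> (x - c1) ^+ 2 <= f x) ->
  (forall x, m <= x <= b -> (x - c2) ^+ 2 <= f x) ->
  ((((m - c1) ^+ 3 - (a - c1) ^+ 3) / 3 + ((b - c2) ^+ 3 - (m - c2) ^+ 3) / 3)%:E
     <= \int[mu]_(x in `[a, b]) (f x)%:E)%E.
Proof.
move=> am mb mf f0 h1 h2; rewrite (int_split am mb mf f0) EFinD.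
by apply: leeD; apply: lb1.
Qed.

Lemma lbcst (f : R -> R) (a b k : R) : a <= b -> measurable_fun setT f ->
  0 <= k -> (forall x, a <= x <= b -> k <= f x) ->
  ((k * (b - a))%:E <= \int[mu]_(x in `[a, b]) (f x)%:E)%E.
Proof.
move=> ab mf k0 h.
have -> : (k * (b - a))%:E = (\int[mu]_(x in `[a, b]) (cst k%:E x))%E.
  rewrite integral_cst //= lebesgue_measure_itv /=.
  case: ifPn => [_|]; first by rewrite -EFinD -EFinM.
  rewrite lte_fin -leNgt => ba; have -> : b = a by apply/le_anti; rewrite ab ba.
  by rewrite subrr mulr0 mule0.
apply: ge0_le_integral => //=.
exact/measurable_EFinP/measurable_funTS.
Qed.

Definition G (p q : R) : R -> R :=
  (sqc (4^-1) \min sqc (2^-1)) \min (sqc p \min sqc q).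

Lemma G_ge p q x y : y <= sqc (4^-1) x -> y <= sqc (2^-1) x ->
  y <= sqc p x -> y <= sqc q x -> y <= G p q x.
Proof. by move=> h1 h2 h3 h4; rewrite /G /= !le_min h1 h2 h3 h4. Qed.

Lemma G_ge0 p q x : 0 <= G p q x.
Proof. by apply: G_ge; rewrite /sqc sqr_ge0. Qed.

Lemma G_le p q x c : c \in [:: 4^-1; 2^-1; p; q] -> G p q x <= sqc c x.
Proof.
rewrite !inE => /or4P[] /eqP ->; rewrite /G /= !ge_min lexx ?orbT //.
Qed.

Lemma G_sym p q : G p q = G q p.
Proof. by apply/funext => x; rewrite /G /= [Order.min (sqc p x) _]minC. Qed.

Lemma G_mf p q : measurable_fun setT (G p q).
Proof.
have h c : measurable_fun setT (sqc c) by exact: continuous_measurable_fun (@sqc_cont c).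
by rewrite /G; apply: measurable_minr; apply: measurable_minr.
Qed.

Lemma sq_le1 c d x : c <= d -> 2 * x <= c + d -> sqc c x <= sqc d x.
Proof.
move=> cd hx; rewrite /sqc.
have : 0 <= (d - c) * (c + d - 2 * x) by apply: mulr_ge0; lra.
nra.
Qed.

Lemma sq_le2 c d x : d <= c -> c + d <= 2 * x -> sqc c x <= sqc d x.
Proof.
move=> cd hx; rewrite /sqc.
have : 0 <= (c - d) * (2 * x - c - d) by apply: mulr_ge0; lra.
nra.
Qed.

Lemma sq_h h a x : 0 <= h -> (a + h <= x \/ x + h <= a) -> h ^+ 2 <= sqc a x.
Proof.
move=> h0 [hx|hx]; rewrite /sqc.
- have : 0 <= (x - a - h) * (x - a + h) by apply: mulr_ge0; lra.
  nra.
- have : 0 <= (a - x - h) * (a - x + h) by apply: mulr_ge0; lra.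
  nra.
Qed.

Definition gI p q a b := (\int[mu]_(x in `[a, b]) (G p q x)%:E)%E.

Lemma L0 p q : 4^-1 <= p -> 4^-1 <= q -> ((192^-1)%:E <= gI p q 0%R (4^-1)%R)%E.
Proof.
move=> hp hq.
apply: le_trans (lb1 (c := 4^-1) _ (G_mf p q) _); last 2 first.
- lra.
- move=> x /andP[x0 x1]; apply: G_ge.
  + exact: lexx.
  + apply: sq_le1; lra.
  + apply: sq_le1; lra.
  + apply: sq_le1; lra.
rewrite lee_fin.
lra.
Qed.

Lemma sqr_gt0' (x : R) : x != 0 -> 0 < x ^+ 2.
Proof. by move=> hx; rewrite lt_def sqrf_eq0 hx sqr_ge0. Qed.

Lemma L1 p q : p < 4^-1 -> 4^-1 <= q ->
  ((1728^-1)%:E <= gI p q 0%R (4^-1)%R)%E /\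
  (p != 12^-1 -> ((1728^-1)%:E < gI p q 0%R (4^-1)%R)%E).
Proof.
move=> hp hq.
have [pl|pg] := ltP p (- 4^-1).
  have H : ((192^-1)%:E <= gI p q 0%R (4^-1)%R)%E.
    apply: le_trans (lb1 (c := 4^-1) _ (G_mf p q) _); last 2 first.
    - lra.
    - move=> x /andP[x0 x1]; apply: G_ge.
      + exact: lexx.
      + apply: sq_le1; lra.
      + apply: sq_le2; lra.
      + apply: sq_le1; lra.
    rewrite lee_fin; lra.
  split; [apply: le_trans H|move=> _; apply: lt_le_trans H]; rewrite ?lte_fin ?lee_fin; lra.
set m := (p + 4^-1) / 2.
have H := @lb2 (G p q) 0 m (4^-1) p (4^-1).
have E : ((m - p) ^+ 3 - (0 - p) ^+ 3) / 3 + ((4^-1 - 4^-1) ^+ 3 - (m - 4^-1) ^+ 3) / 3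
   = 1728^-1 + (p - 12^-1) ^+ 2 * (12 * p + 5) / 48 by rewrite /m; field.
rewrite E in H.
have {}H : ((1728^-1 + (p - 12^-1) ^+ 2 * (12 * p + 5) / 48)%:E <= gI p q 0%R (4^-1)%R)%E.
  apply: H.
  - rewrite /m; lra.
  - rewrite /m; lra.
  - exact: G_mf.
  - exact: G_ge0.
  - move=> x /andP[x0 x1]; apply: G_ge.
    + apply: sq_le1; rewrite /m in x1; lra.
    + apply: sq_le1; rewrite /m in x1; lra.
    + exact: lexx.
    + apply: sq_le1; rewrite /m in x1; lra.
  - move=> x /andP[x0 x1]; apply: G_ge.
    + exact: lexx.
    + apply: sq_le1; lra.
    + apply: sq_le2; rewrite /m in x0; lra.
    + apply: sq_le1; lra.
have pos : 0 <= (p - 12^-1) ^+ 2 * (12 * p + 5) / 48.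
  by apply: divr_ge0; [apply: mulr_ge0; [exact: sqr_ge0|lra]|lra].
split; first by apply: le_trans H; rewrite lee_fin; lra.
move=> hp12; apply: lt_le_trans H; rewrite lte_fin.
have : 0 < (p - 12^-1) ^+ 2 * (12 * p + 5) / 48.
  apply: divr_gt0; [apply: mulr_gt0; [apply: sqr_gt0'; rewrite subr_eq0|lra]|lra].
  exact: hp12.
lra.
Qed.

Lemma M0 p q : ~~ (4^-1 < p < 2^-1) -> ~~ (4^-1 < q < 2^-1) ->
  ((768^-1)%:E <= gI p q (4^-1)%R (2^-1)%R)%E.
Proof.
rewrite !negb_and -!leNgt => hp hq.
have H := @lb2 (G p q) (4^-1) (3 / 8) (2^-1) (4^-1) (2^-1).
apply: le_trans (H _ _ (G_mf p q) (@G_ge0 p q) _ _); first by rewrite lee_fin; lra.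
- lra.
- lra.
- move=> x /andP[x0 x1]; apply: G_ge.
  + exact: lexx.
  + apply: sq_le1; lra.
  + by case/orP: hp => hp; [apply: sq_le2|apply: sq_le1]; lra.
  + by case/orP: hq => hq; [apply: sq_le2|apply: sq_le1]; lra.
- move=> x /andP[x0 x1]; apply: G_ge.
  + apply: sq_le2; lra.
  + exact: lexx.
  + by case/orP: hp => hp; [apply: sq_le2|apply: sq_le1]; lra.
  + by case/orP: hq => hq; [apply: sq_le2|apply: sq_le1]; lra.
Qed.

Lemma R0 p q : p <= 2^-1 -> q <= 2^-1 ->
  ((24^-1)%:E <= gI p q (2^-1)%R 1%R)%E.
Proof.
move=> hp hq.
apply: le_trans (lb1 (c := 2^-1) _ (G_mf p q) _); last 2 first.
- lra.
- move=> x /andP[x0 x1]; apply: G_ge.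
  + apply: sq_le2; lra.
  + exact: lexx.
  + apply: sq_le2; lra.
  + apply: sq_le2; lra.
rewrite lee_fin; lra.
Qed.

Lemma R1 p q : p <= 2^-1 -> 2^-1 < q ->
  ((216^-1)%:E <= gI p q (2^-1)%R 1%R)%E /\
  (q != 5 / 6 -> ((216^-1)%:E < gI p q (2^-1)%R 1%R)%E).
Proof.
move=> hp hq.
have [ql|qg] := ltP (3 / 2) q.
  have H : ((24^-1)%:E <= gI p q (2^-1)%R 1%R)%E.
    apply: le_trans (lb1 (c := 2^-1) _ (G_mf p q) _); last 2 first.
    - lra.
    - move=> x /andP[x0 x1]; apply: G_ge.
      + apply: sq_le2; lra.
      + exact: lexx.
      + apply: sq_le2; lra.
      + apply: sq_le1; lra.
    rewrite lee_fin; lra.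
  split; [apply: le_trans H|move=> _; apply: lt_le_trans H]; rewrite ?lte_fin ?lee_fin; lra.
set m := (2^-1 + q) / 2.
have H := @lb2 (G p q) (2^-1) m 1 (2^-1) q.
have E : ((m - 2^-1) ^+ 3 - (2^-1 - 2^-1) ^+ 3) / 3 + ((1 - q) ^+ 3 - (m - q) ^+ 3) / 3
   = 216^-1 + (q - 5 / 6) ^+ 2 * (11 / 6 - q) / 4 by rewrite /m; field.
rewrite E in H.
have {}H : ((216^-1 + (q - 5 / 6) ^+ 2 * (11 / 6 - q) / 4)%:E <= gI p q (2^-1)%R 1%R)%E.
  apply: H.
  - rewrite /m; lra.
  - rewrite /m; lra.
  - exact: G_mf.
  - exact: G_ge0.
  - move=> x /andP[x0 x1]; apply: G_ge.
    + apply: sq_le2; lra.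
    + exact: lexx.
    + apply: sq_le2; lra.
    + apply: sq_le1; rewrite /m in x1; lra.
  - move=> x /andP[x0 x1]; apply: G_ge.
    + apply: sq_le2; rewrite /m in x0; lra.
    + apply: sq_le2; rewrite /m in x0; lra.
    + apply: sq_le2; rewrite /m in x0; lra.
    + exact: lexx.
have pos : 0 <= (q - 5 / 6) ^+ 2 * (11 / 6 - q) / 4.
  by apply: divr_ge0; [apply: mulr_ge0; [exact: sqr_ge0|lra]|lra].
split; first by apply: le_trans H; rewrite lee_fin; lra.
move=> hq56; apply: lt_le_trans H; rewrite lte_fin.
have : 0 < (q - 5 / 6) ^+ 2 * (11 / 6 - q) / 4.
  apply: divr_gt0; [apply: mulr_gt0; [apply: sqr_gt0'; rewrite subr_eq0|lra]|lra].
  exact: hq56.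
lra.
Qed.

Lemma Rwin p q (lo : R) : 2^-1 <= lo -> lo + 6^-1 <= 1 ->
  (p <= lo \/ lo + 6^-1 <= p) -> (q <= lo \/ lo + 6^-1 <= q) ->
  ((6912^-1)%:E <= gI p q (2^-1)%R 1%R)%E.
Proof.
move=> h1 h2 hp hq.
have sub : `[lo + 24^-1, lo + 8^-1] `<=` `[2^-1, (1:R)].
  move=> x /=; rewrite !in_itv /= => /andP[x0 x1]; apply/andP; split; lra.
have I : (\int[mu]_(x in `[(lo + 24^-1)%R, (lo + 8^-1)%R]) (G p q x)%:E <= gI p q (2^-1)%R 1%R)%E.
  have mG := G_mf p q; apply: ge0_subset_integral => //=.
  - by apply/measurable_EFinP; apply: measurable_funTS.
  - by move=> x _; rewrite lee_fin G_ge0.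
apply: le_trans I.
have H := @lbcst (G p q) (lo + 24^-1) (lo + 8^-1) (24^-1 ^+ 2).
apply: le_trans (H _ (G_mf p q) _ _); first by rewrite lee_fin; lra.
- lra.
- by rewrite sqr_ge0.
- move=> x /andP[x0 x1]; apply: G_ge.
  + by apply: sq_h; [lra|left; lra].
  + by apply: sq_h; [lra|left; lra].
  + by case: hp => hp; apply: sq_h; [lra|left; lra|lra|right; lra].
  + by case: hq => hq; apply: sq_h; [lra|left; lra|lra|right; lra].
Qed.

Lemma R2 p q : 2^-1 < p -> 2^-1 < q -> ((6912^-1)%:E <= gI p q (2^-1)%R 1%R)%E.
Proof.
move=> hp hq.
have [p1|p1] := ltP p (2 / 3); have [q1|q1] := ltP q (2 / 3);
  have [p2|p2] := ltP p (5 / 6); have [q2|q2] := ltP q (5 / 6).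
all: first [ apply: (@Rwin p q (2^-1)); (lra || (by left; lra) || (by right; lra))
           | apply: (@Rwin p q (2 / 3)); (lra || (by left; lra) || (by right; lra))
           | apply: (@Rwin p q (5 / 6)); (lra || (by left; lra) || (by right; lra)) ].
Qed.

Lemma gI_split p q : gI p q 0%R 1%R =
  (gI p q 0%R (4^-1)%R + gI p q (4^-1)%R (2^-1)%R + gI p q (2^-1)%R 1%R)%E.
Proof.
rewrite /gI (@int_split (G p q) 0 (4^-1) 1); [|lra|lra|exact: G_mf|exact: G_ge0].
rewrite (@int_split (G p q) (4^-1) (2^-1) 1); [|lra|lra|exact: G_mf|exact: G_ge0].
by rewrite addeA.
Qed.

Lemma gI_sym p q a b : gI p q a b = gI q p a b.
Proof. by rewrite /gI G_sym. Qed.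

Lemma gI_ge0 p q a b : (0%R <= gI p q a b)%E.
Proof. by apply: integral_ge0 => x _; rewrite lee_fin G_ge0. Qed.

Lemma comb (a b c : R) (x y z : \bar R) : (a%:E <= x)%E -> (b%:E <= y)%E -> (c%:E <= z)%E ->
  ((a + b + c)%:E <= x + y + z)%E.
Proof. by move=> h1 h2 h3; rewrite !EFinD; apply: leeD => //; apply: leeD. Qed.

Lemma comb_lt1 (a b c : R) (x y z : \bar R) : (a%:E < x)%E -> (b%:E <= y)%E -> (c%:E <= z)%E ->
  ((a + b + c)%:E < x + y + z)%E.
Proof. by move=> h1 h2 h3; rewrite !EFinD; apply: lte_leD => //; apply: lte_leD. Qed.

Lemma comb_lt3 (a b c : R) (x y z : \bar R) : (a%:E <= x)%E -> (b%:E <= y)%E -> (c%:E < z)%E ->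
  ((a + b + c)%:E < x + y + z)%E.
Proof.
move=> h1 h2 h3.
have h12 : ((a + b)%:E <= x + y)%E by rewrite EFinD; apply: leeD.
rewrite EFinD addeC [(x + y + z)%E]addeC.
by apply: lte_leD.
Qed.

Lemma notM (r : R) : r <= 4^-1 \/ 2^-1 <= r -> ~~ (4^-1 < r < 2^-1).
Proof. by move=> h; apply/negP => /andP[h1 h2]; case: h; lra. Qed.

Lemma key1 p q : p <= 2^-1 -> 2^-1 < q ->
  ((5 / 768)%:E <= gI p q 0%R 1%R)%E /\
  (~ (p = 12^-1 /\ q = 5 / 6) -> ((5 / 768)%:E < gI p q 0%R 1%R)%E).
Proof.
move=> hp hq; rewrite gI_split.
have [hR1 hR2] := R1 hp hq.
have hM0 := gI_ge0 p q (4^-1) (2^-1).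
have [pl|pg] := ltP p (4^-1).
  have [hL1 hL2] := L1 (q := q) pl (ltW (lt_trans (ltac:(lra) : 4^-1 < 2^-1) hq)).
  have hM : ((768^-1)%:E <= gI p q (4^-1)%R (2^-1)%R)%E.
    by apply: M0; apply: notM; [left|right]; lra.
  have E : 5 / 768 = 1728^-1 + 768^-1 + 216^-1 :> R by field.
  rewrite E; split; first exact: comb.
  move=> hne; have [p12|p12] := eqVneq p 12^-1.
    have q56 : q != 5 / 6 by apply/eqP => q56; apply: hne.
    exact: comb_lt3 hL1 hM (hR2 q56).
  exact: comb_lt1 (hL2 p12) hM hR1.
have hL := @L0 p q pg (ltW (lt_trans (ltac:(lra) : 4^-1 < 2^-1) hq)).
have H := comb hL hM0 hR1.
have lt : ((5 / 768)%:E < (192^-1 + 0 + 216^-1)%:E :> \bar R)%E by rewrite lte_fin; lra.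
split; [exact: ltW (lt_le_trans lt H) | by move=> _; exact: lt_le_trans lt H].
Qed.

Lemma key p q :
  ((5 / 768)%:E <= gI p q 0%R 1%R)%E /\
  (~ ((p = 12^-1 /\ q = 5 / 6) \/ (p = 5 / 6 /\ q = 12^-1)) ->
     ((5 / 768)%:E < gI p q 0%R 1%R)%E).
Proof.
suff : ((p = 12^-1 /\ q = 5 / 6) \/ (p = 5 / 6 /\ q = 12^-1)) /\ ((5 / 768)%:E <= gI p q 0%R 1%R)%E
       \/ ((5 / 768)%:E < gI p q 0%R 1%R)%E.
  case=> [[h1 h2]|h]; first by split => // /(_ h1).
  by split => //; exact: ltW.
have [hp|hp] := leP p (2^-1); have [hq|hq] := leP q (2^-1).
- right; rewrite gI_split.
  have H := comb (gI_ge0 p q 0 (4^-1)) (gI_ge0 p q (4^-1) (2^-1)) (R0 hp hq).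
  apply: lt_le_trans H; rewrite lte_fin; lra.
- have [h1 h2] := key1 hp hq.
  have [e|ne] := pselect (p = 12^-1 /\ q = 5 / 6); first by left; split => //; left.
  by right; apply: h2.
- rewrite gI_sym; have [h1 h2] := key1 hq hp.
  have [e|ne] := pselect (q = 12^-1 /\ p = 5 / 6).
    by left; split => //; right; case: e.
  by right; apply: h2.
- right; rewrite gI_split.
  have hL := @L0 p q (ltW (lt_trans (ltac:(lra) : 4^-1 < 2^-1) hp))
                     (ltW (lt_trans (ltac:(lra) : 4^-1 < 2^-1) hq)).
  have hM : ((768^-1)%:E <= gI p q (4^-1)%R (2^-1)%R)%E.
    by apply: M0; apply: notM; right; lra.
  have H := comb hL hM (R2 hp hq).
  apply: lt_le_trans H; rewrite lte_fin; lra.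
Qed.

Lemma opt_val : gI (12^-1) (5 / 6) 0%R 1%R = (5 / 768)%:E.
Proof.
apply/le_anti; rewrite (proj1 (key (12^-1) (5 / 6))) andbT.
set p := (12^-1 : R); set q := (5 / 6 : R).
have mG := G_mf p q; have G0 := G_ge0 p q.
rewrite /gI (@int_split (G p q) 0 (6^-1) 1); [|lra|lra|exact: mG|exact: G0].
rewrite (@int_split (G p q) (6^-1) (3 / 8) 1); [|lra|lra|exact: mG|exact: G0].
rewrite (@int_split (G p q) (3 / 8) (2 / 3) 1); [|lra|lra|exact: mG|exact: G0].
have u1 := @ub1 (G p q) 0 (6^-1) p ltac:(lra) mG G0
  (fun x _ => G_le x (ltac:(by rewrite !inE eqxx ?orbT) : p \in [:: 4^-1; 2^-1; p; q])).
have u2 := @ub1 (G p q) (6^-1) (3 / 8) (4^-1) ltac:(lra) mG G0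
  (fun x _ => G_le x (ltac:(by rewrite !inE eqxx ?orbT) : 4^-1 \in [:: 4^-1; 2^-1; p; q])).
have u3 := @ub1 (G p q) (3 / 8) (2 / 3) (2^-1) ltac:(lra) mG G0
  (fun x _ => G_le x (ltac:(by rewrite !inE eqxx ?orbT) : 2^-1 \in [:: 4^-1; 2^-1; p; q])).
have u4 := @ub1 (G p q) (2 / 3) 1 q ltac:(lra) mG G0
  (fun x _ => G_le x (ltac:(by rewrite !inE eqxx ?orbT) : q \in [:: 4^-1; 2^-1; p; q])).
apply: le_trans (leeD u1 (leeD u2 (leeD u3 u4))) _.
rewrite -!EFinD lee_fin /p /q; lra.
Qed.
End S.

Section Fin.
Context (R : realType).
Local Open Scope classical_set_scope.
Local Open Scope ring_scope.

Lemma bigmin_le (s : seq R) (x a : R) : a \in s ->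
  (\big[Order.min/+oo%E]_(b <- s) ((x - b) ^+ 2)%:E <= ((x - a) ^+ 2)%:E)%E.
Proof.
elim: s => [|b s IH] //; rewrite big_cons inE => /orP[/eqP ->|/IH h].
  by rewrite ge_min lexx.
by rewrite ge_min h orbT.
Qed.

Lemma bigmin_att (s : seq R) (x : R) : s != [::] ->
  exists2 a, a \in s &
  \big[Order.min/+oo%E]_(b <- s) ((x - b) ^+ 2)%:E = ((x - a) ^+ 2)%:E.
Proof.
elim: s => [|b s IH] // _; rewrite big_cons.
have [->|sn] := eqVneq s [::].
  by exists b; rewrite ?inE ?eqxx // big_nil; apply: min_l; rewrite leey.
have [a ain ->] := IH sn.
have [h|h] := leP ((x - b) ^+ 2)%:E ((x - a) ^+ 2)%:E.
  by exists b; rewrite ?inE ?eqxx.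
by exists a; rewrite ?inE ?ain ?orbT.
Qed.

Lemma mindist_G (S : {fset R}) p q :
  (forall a, (a \in S) = (a \in [:: 4^-1; 2^-1; p; q])) ->
  mindist S = (fun x => (G p q x)%:E).
Proof.
move=> hS; apply/funext => x; rewrite /mindist.
apply/le_anti/andP; split.
- rewrite /G /= !EFin_min !le_min.
  by rewrite !bigmin_le // hS !inE eqxx ?orbT.
- have : (S : seq R) != [::].
    apply/eqP => S0; have := hS (4^-1); rewrite inE eqxx /=.
    by rewrite -[_ \in S]/(_ \in (S : seq R)) S0.
  move=> /(bigmin_att x) [a ain ->]; rewrite lee_fin; apply: G_le.
  by rewrite -hS.
Qed.
End Fin.

Section Fin2.
Context (R : realType).
Local Open Scope classical_set_scope.
Local Open Scope ring_scope.

Lemma distE (S : {fset R}) p q :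
  (forall a, (a \in S) = (a \in [:: 4^-1; 2^-1; p; q])) ->
  distortion (uniform_prob (@ltr01 R)) S = gI p q 0%R 1%R.
Proof.
move=> hS; rewrite /distortion (mindist_G hS).
have mG := G_mf p q.
rewrite integral_uniform //=.
- by rewrite subr0 invr1 mul1e.
- exact/measurable_EFinP.
- by move=> x; rewrite lee_fin G_ge0.
Qed.

Lemma memfsE (A : {fset R}) a : (a \in A) = (a \in enum_fset A).
Proof. by []. Qed.

Lemma fset_le2 (A : {fset R}) : (#|` A| <= 2)%N -> exists p q,
  forall a, (a \in (A `|` [fset 4^-1; 2^-1])%fset) = (a \in [:: 4^-1; 2^-1; p; q]).
Proof.
case E: (enum_fset A) => [|p [|q [|r s]]] // _.
- exists (4^-1), (4^-1) => a; rewrite in_fsetU in_fset2 memfsE E !inE.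
  by case: (a == 4^-1); case: (a == 2^-1).
- exists p, (4^-1) => a; rewrite in_fsetU in_fset2 memfsE E !inE.
  by case: (a == 4^-1); case: (a == 2^-1); case: (a == p).
- exists p, q => a; rewrite in_fsetU in_fset2 memfsE E !inE.
  by case: (a == 4^-1); case: (a == 2^-1); case: (a == p); case: (a == q).
Qed.

Lemma P_itv_pos (a b : R) : 0 <= a -> a < b -> b <= 1 ->
  (0%R < uniform_prob (@ltr01 R) `[a, b])%E.
Proof.
move=> a0 ab b1; rewrite /uniform_prob.
have := @lbcst R (uniform_pdf 0 1) a b 1 (ltW ab) (measurable_uniform_pdf 0 1) ler01.
move=> /(_ _) H; apply: lt_le_trans (H _); first by rewrite lte_fin mul1r subr_gt0.
move=> x /andP[xa xb]; rewrite /uniform_pdf.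
have -> : (0 <= x <= 1) = true by apply/andP; split; lra.
by rewrite subr0 invr1.
Qed.

Definition alpha4 : {fset R} := [fset 12^-1; 4^-1; 2^-1; 5 / 6]%fset.

Lemma alpha4E a : (a \in alpha4) = (a \in [:: 4^-1; 2^-1; 12^-1; 5 / 6]).
Proof.
rewrite /alpha4 !inE.
by case: (a == 4^-1); case: (a == 2^-1); case: (a == 12^-1); case: (a == 5 / 6).
Qed.

Lemma vor1 : voronoi alpha4 (4^-1) = [set` `[6^-1, 3 / 8]].
Proof.
apply/seteqP; split => x /=.
- move=> h; rewrite in_itv /=.
  have h1 := h (12^-1) ltac:(by rewrite alpha4E !inE eqxx ?orbT).
  have h2 := h (2^-1) ltac:(by rewrite alpha4E !inE eqxx ?orbT).
  apply/andP; split; nra.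
- rewrite in_itv /= => /andP[x0 x1] b; rewrite alpha4E !inE.
  by case/or4P => /eqP ->; nra.
Qed.

Lemma vor2 : voronoi alpha4 (2^-1) = [set` `[3 / 8, 2 / 3]].
Proof.
apply/seteqP; split => x /=.
- move=> h; rewrite in_itv /=.
  have h1 := h (4^-1) ltac:(by rewrite alpha4E !inE eqxx ?orbT).
  have h2 := h (5 / 6) ltac:(by rewrite alpha4E !inE eqxx ?orbT).
  apply/andP; split; nra.
- rewrite in_itv /= => /andP[x0 x1] b; rewrite alpha4E !inE.
  by case/or4P => /eqP ->; nra.
Qed.
End Fin2.

Theorem proposition3p3 (R : realType) :
  let P : probability (measurableTypeR R) R := uniform_prob (@ltr01 R) in
  let beta : {fset R} := [fset 4^-1; 2^-1]%fset in
  let alpha4 : {fset R} := [fset 12^-1; 4^-1; 2^-1; 5 / 6]%fset in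
  [/\ cond_optimal P beta 4 alpha4,
      (forall S : {fset R}, cond_optimal P beta 4 S -> S = alpha4) &
      condV P beta 4 = (5 / 768)%:E].
Proof.
move=> P beta alpha4'.
have ne : (4^-1 : R) != 2^-1 by apply/eqP => h; lra.
have cardb : #|` beta| = 2%N by rewrite /beta cardfs2 ne.
have a4E : alpha4' = alpha4 R by [].
have dist4 : distortion P alpha4' = (5 / 768)%:E.
  by rewrite a4E (@distE R _ (12^-1) (5 / 6) (@alpha4E R)) opt_val.
have alphaU : alpha4' = ([fset 12^-1; 5 / 6] `|` beta)%fset.
  apply/fsetP => a; rewrite a4E alpha4E in_fsetU in_fset2 !inE.
  by case: (a == 4^-1); case: (a == 2^-1); case: (a == 12^-1); case: (a == 5 / 6).
have ca : (#|` [fset (12^-1 : R); 5 / 6]%fset| <= 4 - #|` beta|)%N.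
  by rewrite cardb cardfs2; case: (_ != _).
have cV : condV P beta 4 = (5 / 768)%:E.
  rewrite /condV; apply/le_anti/andP; split.
    apply: ereal_inf_lbound; exists [fset 12^-1; 5 / 6]%fset => //.
    by rewrite -alphaU dist4.
  apply/ereal_infP => _ [alpha /= calpha <-].
  move: calpha; rewrite cardb => /fset_le2 [p [q hpq]].
  by rewrite (distE hpq); case: (key p q).
split => //.
- split; first by rewrite cardb.
  exists [fset 12^-1; 5 / 6]%fset; split => //.
  + by rewrite dist4 cV.
  + move=> b; rewrite /beta in_fset2 => /orP[] /eqP ->.
    * by rewrite a4E vor1; apply: P_itv_pos; lra.
    * by rewrite a4E vor2; apply: P_itv_pos; lra.
- move=> S [_ [alpha [calpha -> dS _]]].
  move: calpha; rewrite cardb => /fset_le2 [p [q hpq]].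
  rewrite cV (distE hpq) in dS.
  have [_ h] := key p q.
  have pq : (p = 12^-1 /\ q = 5 / 6) \/ (p = 5 / 6 /\ q = 12^-1).
    apply: contrapT => /h; rewrite dS ltxx //.
  apply/fsetP => a; rewrite hpq a4E alpha4E !inE.
  case: pq => [[-> ->]|[-> ->]];
  by case: (a == 4^-1); case: (a == 2^-1); case: (a == 12^-1); case: (a == 5 / 6).
Qed.
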